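(* Let $a,c\in\mathbb{Z}$ with $c\neq 0$ and let $k,m,n\in\mathbb{N}$ with $km>n\ge 1$. Suppose $f(x)=(x^k+c)^m-ax^n\in\mathbb{Z}[x]$ is irreducible over $\mathbb{Q}$. Let $t=\gcd(n,k)$, $n=n_1t$, $k=k_1t$. Then $$\mathfrak{D}_f=(-1)^{\binom{km}{2}+(km+n+t)(m-1)}\,a^{k(m-1)}\,c^{m(n-1)}\left[(km)^{k_1m}c^{k_1m-n_1}-a^{k_1}n^{n_1}(km-n)^{k_1m-n_1}\right]^{t}.$$
   Context: $\mathfrak{D}_f$ denotes the discriminant of the monic polynomial $f(x)$ (degree $km$). The convention $0^0=1$ is used. *)

(* Defs.v *)
From HB Require Import structures.
From mathcomp Require Import all_boot all_order all_algebra all_field.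
Set Implicit Arguments. Unset Strict Implicit. Unset Printing Implicit Defensive.
Import Order.TTheory GRing.Theory Num.Theory.
Local Open Scope ring_scope.

Definition int_poly_roots (f : {poly int}) : seq algC :=
  sval (closed_field_poly_normal (map_poly (intr : int -> algC) f)).

(* Discriminant of a monic polynomial f with roots r_1..r_N (with multiplicity):
   D_f = prod_{i<j} (r_i - r_j)^2. *)
Definition disc (f : {poly int}) : algC :=
  let rs := int_poly_roots f in
  \prod_(i < size rs) \prod_(j < size rs | (i < j)%N) (rs`_i - rs`_j) ^+ 2.

(* Main.v *)
Require Import Defs.
From HB Require Import structures.
From mathcomp Require Import all_boot all_order all_algebra all_field.
From mathcomp Require Import ring zify.
Import Order.TTheory GRing.Theory Num.Theory.
Local Open Scope ring_scope.

Section Gen.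
Variable R : comNzRingType.

Lemma prod_const_seq (rs : seq R) (x : R) : \prod_(r <- rs) x = x ^+ size rs.
Proof. by elim: rs => [|r rs IH]; rewrite ?big_nil ?big_cons ?IH ?exprS. Qed.

Lemma prod_neg_seq (ss : seq R) (x : R) :
  \prod_(s <- ss) (x - s) = (-1) ^+ size ss * \prod_(s <- ss) (s - x).
Proof.
elim: ss => [|s ss IH]; first by rewrite !big_nil expr0 mulr1.
rewrite !big_cons IH /= exprS; ring.
Qed.

Lemma horner_prodXsubC (ss : seq R) x :
  (\prod_(s <- ss) ('X - s%:P)).[x] = \prod_(s <- ss) (x - s).
Proof. by rewrite horner_prod; apply: eq_bigr => s _; rewrite hornerXsubC. Qed.

Lemma prod_swap (rs ss : seq R) :
  \prod_(r <- rs) \prod_(s <- ss) (r - s) =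
  (-1) ^+ (size rs * size ss) * \prod_(s <- ss) \prod_(r <- rs) (s - r).
Proof.
under eq_bigr => r _ do rewrite prod_neg_seq.
by rewrite big_split /= prod_const_seq -exprM mulnC exchange_big.
Qed.

Lemma prod_swap_poly (rs ss : seq R) (lc : R) :
  \prod_(r <- rs) (lc *: \prod_(s <- ss) ('X - s%:P)).[r] =
  lc ^+ size rs * (-1) ^+ (size rs * size ss) *
  \prod_(s <- ss) (\prod_(r <- rs) ('X - r%:P)).[s].
Proof.
under eq_bigr => r _ do rewrite hornerZ horner_prodXsubC.
under [X in _ = _ * X]eq_bigr => s _ do rewrite horner_prodXsubC.
by rewrite big_split /= prod_const_seq prod_swap mulrA.
Qed.

End Gen.


Section L1.
Variable R : idomainType.

Lemma prod_neg_seq' (ss : seq R) (x : R) :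
  \prod_(s <- ss) (s - x) = (-1) ^+ size ss * \prod_(s <- ss) (x - s).
Proof.
elim: ss => [|s ss IH]; first by rewrite !big_nil expr0 mulr1.
rewrite !big_cons IH /= exprS; ring.
Qed.

Lemma sign_sq (N : nat) : (-1) ^+ N * (-1) ^+ N = 1 :> R.
Proof. by rewrite -exprD addnn -mul2n exprM (_ : (-1) ^+ 2 = 1 :> R) ?expr1n // expr2 mulrN1 opprK. Qed.

Definition D (rs : seq R) :=
  \prod_(i < size rs) \prod_(j < size rs | (i < j)%N) (rs`_i - rs`_j) ^+ 2.

Lemma disc_deriv (rs : seq R) :
  D rs = (-1) ^+ 'C(size rs, 2) *
         \prod_(r <- rs) (\prod_(z <- rs) ('X - z%:P))^`().[r].
Proof.
elim: rs => [|x rs IH].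
  by rewrite /D !big_nil big_ord0 mulr1.
have E1 : D (x :: rs) = (\prod_(r <- rs) (x - r)) ^+ 2 * D rs.
  rewrite /D /= big_ord_recl /=.
  congr (_ * _).
    rewrite big_mkcond big_ord_recl /= mul1r (big_nth 0) big_mkord -prodrXl.
    by apply: eq_bigr => j _.
  apply: eq_bigr => i _.
  rewrite big_mkcond big_ord_recl /= mul1r [RHS]big_mkcond.
  by apply: eq_bigr => j _.
rewrite E1 IH !big_cons derivM derivXsubC mul1r /= !hornerE.
rewrite subrr mul0r addr0.
have E2 : \prod_(r <- rs) (\prod_(z <- rs) ('X - z%:P) + ('X - x%:P) *
             (\prod_(z <- rs) ('X - z%:P))^`()).[r]
          = \prod_(r <- rs) (r - x) *
            \prod_(r <- rs) (\prod_(z <- rs) ('X - z%:P))^`().[r].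
  rewrite -big_split /=; apply: eq_big_seq => r hr.
  rewrite hornerD hornerM hornerXsubC.
  have /rootP -> : root (\prod_(z <- rs) ('X - z%:P)) r by rewrite root_prod_XsubC.
  by rewrite add0r.
rewrite E2 prod_neg_seq' horner_prodXsubC binS bin1 exprD.
have := sign_sq (size rs); set s := (-1) ^+ size rs => hs.
rewrite /=. move: (\prod_(r <- rs) (x - r)) (\prod_(r <- rs) _^`().[r]) ((-1)^+'C(size rs,2)) => P Q C. rewrite -[LHS]mulr1 -hs; ring.
Qed.
End L1.


Lemma odd_gcd n k : odd (gcdn n k) = odd n || odd k.
Proof.
apply/idP/idP.
  apply: contraLR; rewrite negb_or -!dvdn2 => /andP [h1 h2].
  by rewrite dvdn_gcd h1 h2.
by case/orP => h; [apply: (dvdn_odd (dvdn_gcdl n k)) | apply: (dvdn_odd (dvdn_gcdr n k))].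
Qed.

Section Euclid.
Variable F : closedFieldType.

Definition Pe (n k : nat) := forall (b w : F) (rs : seq F),
  \prod_(s <- rs) ('X - s%:P) = 'X^n - b%:P ->
  \prod_(s <- rs) (w - s ^+ k) =
  (w ^+ (n %/ gcdn n k) - b ^+ (k %/ gcdn n k)) ^+ gcdn n k.

Lemma roots_facts n (b : F) rs : (0 < n)%N ->
  \prod_(s <- rs) ('X - s%:P) = 'X^n - b%:P ->
  size rs = n /\ forall s, s \in rs -> s ^+ n = b.
Proof.
move=> n0 H; split.
  have := size_prod_XsubC rs id; rewrite H size_XnsubC //; by case.
move=> s hs; have : root (\prod_(s <- rs) ('X - s%:P)) s by rewrite root_prod_XsubC.
by rewrite H /root !hornerE subr_eq0 => /eqP.
Qed.

Arguments roots_facts {n b rs}.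

Lemma step n k : (0 < n)%N -> (n <= k)%N -> Pe n (k - n) -> Pe n k.
Proof.
move=> n0 nk IH b w rs Hrs.
have [sz hr] := roots_facts n0 Hrs.
set t := gcdn n k.
have ht : gcdn n (k - n) = t by rewrite /t -{2}(subnKC nk) gcdnDl.
have t0 : (0 < t)%N by rewrite gcdn_gt0 n0.
have tn : (t %| n)%N := dvdn_gcdl n k.
have tk : (t %| k)%N := dvdn_gcdr n k.
have k0 : (0 < k)%N := leq_trans n0 nk.
have k1pos : (0 < k %/ t)%N by rewrite divn_gt0 // dvdn_leq.
have nE : n = (n %/ t * t)%N by rewrite divnK.
have [bE|bn0] := eqVneq b 0.
  rewrite bE in hr *.
  have -> : \prod_(s <- rs) (w - s ^+ k) = \prod_(s <- rs) w.
    apply: eq_big_seq => s hs; have := hr s hs.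
    move/eqP; rewrite expf_eq0 n0 /= => /eqP ->; by rewrite expr0n (negPf (lt0n_neq0 k0)) subr0.
  by rewrite prod_const_seq sz expr0n (negPf (lt0n_neq0 k1pos)) subr0 -exprM -nE.
have -> : \prod_(s <- rs) (w - s ^+ k) = \prod_(s <- rs) (b * (w / b - s ^+ (k - n))).
  apply: eq_big_seq => s hs.
  rewrite -{1}(subnK nk) exprD hr //; field; exact: bn0.
rewrite big_split /= prod_const_seq sz (IH _ _ _ Hrs) ht divnBr //.
have n1k1 : (n %/ t <= k %/ t)%N by rewrite leq_div2r.
rewrite {1}nE exprM -exprMn expr_div_n.
congr (_ ^+ _).
set B1 := b ^+ (n %/ t); set W1 := w ^+ (n %/ t).
have -> : b ^+ (k %/ t) = B1 * b ^+ (k %/ t - n %/ t) by rewrite /B1 -exprD subnKC.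
have B10 : B1 != 0 by rewrite expf_neq0.
field; exact: B10.
Qed.

Lemma euclid N : forall n k, (n + k <= N)%N -> (0 < n)%N -> Pe n k.
Proof.
elim: N => [|N IHN] n k hN n0; first by move: hN n0; case: n.
have [->|k0] := posnP k.
  move=> b w rs Hrs; have [sz _] := roots_facts n0 Hrs.
  rewrite gcdn0 divnn n0 div0n expr0 expr1.
  by under eq_bigr => s _ do rewrite expr0; rewrite prod_const_seq sz.
have [nk|kn] := leqP n k.
  apply: step => //; apply: IHN => //.
  by rewrite subnKC //; lia.
move=> b w rs Hrs.
have [sz hr] := roots_facts n0 Hrs.
have [us Hus] := closed_field_poly_normal ('X^k - w%:P : {poly F}).
have mon : lead_coef ('X^k - w%:P : {poly F}) = 1 by rewrite lead_coefXnsubC.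
rewrite mon scale1r in Hus; symmetry in Hus.
have [szu _] := roots_facts k0 Hus.
have Pk : Pe k n.
  rewrite -(subnKC (ltnW kn)); apply: step => //; first exact: leq_addr.
  rewrite addKn; apply: IHN => //; lia.
have E1 : \prod_(s <- rs) (w - s ^+ k) =
          (-1) ^+ n * \prod_(s <- rs) (1 *: \prod_(u <- us) ('X - u%:P)).[s].
  rewrite -sz -prod_const_seq -big_split /=; apply: eq_bigr => s _.
  by rewrite scale1r Hus !hornerE; ring.
rewrite E1 prod_swap_poly expr1n mul1r sz szu Hrs.
have E2 : \prod_(u <- us) ('X^n - b%:P).[u] = (-1) ^+ k * \prod_(u <- us) (b - u ^+ n).
  rewrite -szu -prod_const_seq -big_split /=; apply: eq_bigr => u _.
  by rewrite !hornerE; ring.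
rewrite E2 (Pk w b us Hus) gcdnC.
set t := gcdn n k; set X := w ^+ (n %/ t); set Y := b ^+ (k %/ t).
have -> : (Y - X) ^+ t = (-1) ^+ t * (X - Y) ^+ t by rewrite -exprMn mulN1r opprB.
rewrite !mulrA -!exprD.
have -> : ((-1) ^+ (n + n * k + k + t) = 1 :> F).
  rewrite -signr_odd !oddD !oddM /t odd_gcd.
  by case: (odd n); case: (odd k).
by rewrite mul1r.
Qed.
End Euclid.


Lemma prod_roots (us : seq algC) :
  \prod_(u <- us) u = (-1) ^+ size us * (\prod_(u <- us) ('X - u%:P)).[0].
Proof.
rewrite horner_prodXsubC -prod_neg_seq'.
by apply: eq_bigr => u _; rewrite subr0.
Qed.

Lemma deriv_val (A C : algC) (k m n : nat) r :
  (('X^k + C%:P) ^+ m - A *: 'X^n)^`().[r] =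
  (k%:R * r ^+ k.-1) * (r ^+ k + C) ^+ m.-1 * m%:R - A * (n%:R * r ^+ n.-1).
Proof.
rewrite derivB derivZ deriv_exp derivD !derivXn derivC addr0.
rewrite !(hornerMn, hornerM, hornerD, hornerXn, hornerC, horner_exp, hornerX, hornerZ, hornerN).
rewrite -[r ^+ k.-1 *+ k]mulr_natl -[r ^+ n.-1 *+ n]mulr_natl -[_ *+ m]mulr_natr; ring.
Qed.

Lemma Fp_props (A C : algC) (k m n : nat) : (0 < n)%N -> (n < k * m)%N ->
  size (('X^k + C%:P) ^+ m - A *: 'X^n) = (k * m).+1 /\
  lead_coef (('X^k + C%:P) ^+ m - A *: 'X^n) = 1.
Proof.
move=> hn hnk.
have k0 : (0 < k)%N by case: k hnk => //; rewrite mul0n.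
have mon : ('X^k + C%:P) ^+ m \is monic by apply: monic_exp; apply: monicXnaddC.
have sGm : size (('X^k + C%:P) ^+ m) = (k * m).+1.
  have := size_exp ('X^k + C%:P) m; rewrite size_XnaddC //= => <-.
  by rewrite prednK // size_poly_gt0 monic_neq0.
have sl : (size (- (A *: 'X^n)) < size (('X^k + C%:P) ^+ m))%N.
  rewrite size_opp sGm ltnS; apply: leq_trans (size_scale_leq _ _) _.
  by rewrite size_polyXn.
split; first by rewrite size_addl // sGm.
by rewrite lead_coefDl // (monicP mon).
Qed.

Lemma parity2 k m n : (0 < m)%N -> (0 < n)%N ->
  odd ((k * m + n + gcdn n k) * (m - 1)) = odd (k * m * (n - 1) + k + k * n).
Proof.
case: m => // m _; case: n => // n _.
rewrite !subn1 /= !(oddD, oddM, oddS, odd_gcd, addnS, addSn, mulnS) /=.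
by case: (odd k); case: (odd m); case: (odd n).
Qed.


Lemma mainQ (A C : algC) (k m n : nat) (rs : seq algC) :
  C != 0 -> A != 0 -> (0 < n)%N -> (n < k * m)%N ->
  \prod_(z <- rs) ('X - z%:P) = ('X^k + C%:P) ^+ m - A *: 'X^n ->
  \prod_(r <- rs) (('X^k + C%:P) ^+ m - A *: 'X^n)^`().[r] =
  (-1) ^+ ((k * m + n + gcdn n k) * (m - 1)) * A ^+ (k * (m - 1)) * C ^+ (m * (n - 1)) *
  ((k * m)%:R ^+ (k %/ gcdn n k * m) * C ^+ (k %/ gcdn n k * m - n %/ gcdn n k)
   - A ^+ (k %/ gcdn n k) * n%:R ^+ (n %/ gcdn n k)
     * (k * m - n)%:R ^+ (k %/ gcdn n k * m - n %/ gcdn n k)) ^+ gcdn n k.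
Proof.
move=> hC hA hn hnk HF.
set Fp := (('X^k + C%:P) ^+ m - A *: 'X^n) in HF *.
have k0 : (0 < k)%N by case: k hnk {Fp HF} => //; rewrite mul0n.
have m0 : (0 < m)%N by case: m hnk {Fp HF} => //; rewrite muln0.
have [sFp _] := @Fp_props A C k m n hn hnk.
have sz : size rs = (k * m)%N.
  by have := size_prod_XsubC rs id; rewrite HF -/Fp sFp; case.
have hr : forall r, r \in rs -> (r ^+ k + C) ^+ m = A * r ^+ n.
  move=> r hr; have : root (\prod_(z <- rs) ('X - z%:P)) r by rewrite root_prod_XsubC.
  by rewrite HF /root /Fp !hornerE subr_eq0 => /eqP.
have hPR : \prod_(r <- rs) r = (-1) ^+ (k * m) * C ^+ m.
  by rewrite prod_roots HF sz /Fp !hornerE !expr0n (negPf (lt0n_neq0 k0)) (negPf (lt0n_neq0 hn)) add0r mulr0 subr0.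
have hr0 : forall r, r \in rs -> r != 0.
  move=> r hin; apply/negP => /eqP r0; have := hr r hin.
  rewrite r0 !expr0n (negPf (lt0n_neq0 k0)) (negPf (lt0n_neq0 hn)) add0r mulr0 => /eqP.
  by rewrite expf_eq0 (negPf hC) andbF.
have hg0 : forall r, r \in rs -> r ^+ k + C != 0.
  move=> r hin; apply/negP => /eqP g0; have := hr r hin.
  rewrite g0 expr0n (negPf (lt0n_neq0 m0)) => /esym /eqP.
  by rewrite mulf_eq0 (negPf hA) /= expf_eq0 (negPf (hr0 r hin)) andbF.
have hL : (k * m - n)%:R = k%:R * m%:R - n%:R :> algC by rewrite natrB ?natrM // ltnW.
have key : forall r, r \in rs -> Fp^`().[r] * (r * (r ^+ k + C)) =
    A * r ^+ n * ((k * m - n)%:R * r ^+ k - n%:R * C).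
  move=> r hin; rewrite deriv_val hL.
  have H := hr r hin.
  have e1 : r ^+ k = r ^+ k.-1 * r by rewrite -exprSr prednK.
  have e2 : (r ^+ k + C) ^+ m = (r ^+ k + C) ^+ m.-1 * (r ^+ k + C) by rewrite -exprSr prednK.
  have e3 : r ^+ n = r ^+ n.-1 * r by rewrite -exprSr prednK.
  rewrite e2 e3 in H; rewrite e3.
  move: H e1; set P := r ^+ k; set X1 := r ^+ k.-1; set G1 := (P + C) ^+ m.-1; set Y := r ^+ n.-1.
  move=> H e1.
  apply/eqP; rewrite -subr_eq0; apply/eqP.
  transitivity (k%:R * m%:R * P * (G1 * (P + C) - A * (Y * r)) + k%:R * m%:R * G1 * (P + C) * (X1 * r - P)).
    ring.
  by rewrite H e1 !subrr !mulr0 addr0.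
have E : \prod_(r <- rs) (Fp^`().[r] * (r * (r ^+ k + C))) =
         \prod_(r <- rs) (A * r ^+ n * ((k * m - n)%:R * r ^+ k - n%:R * C)).
  by apply: eq_big_seq => r hin; apply: key.
rewrite !big_split /= prod_const_seq prodrXl hPR sz in E.
have [us Hus] := closed_field_poly_normal ('X^k + C%:P : {poly algC}).
rewrite lead_coefXnaddC // in Hus.
have szu : size us = k.
  by have := size_prod_XsubC us id; rewrite -(scale1r (\prod_(_ <- _) _)) -Hus size_XnaddC //; case.
have hPG : \prod_(r <- rs) (r ^+ k + C) =
   (-1) ^+ (k * m * k) * ((- A) ^+ k * ((-1) ^+ k * C) ^+ n).
  transitivity (\prod_(r <- rs) (1 *: \prod_(u <- us) ('X - u%:P)).[r]).
    by apply: eq_bigr => r _; rewrite -Hus !hornerE.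
  rewrite prod_swap_poly expr1n mul1r sz szu HF.
  congr (_ * _).
  have hu : forall u, u \in us -> u ^+ k + C = 0.
    move=> u hin; have : root (\prod_(z <- us) ('X - z%:P)) u by rewrite root_prod_XsubC.
    by rewrite -(scale1r (\prod_(_ <- _) _)) -Hus /root !hornerE => /eqP.
  transitivity (\prod_(u <- us) (- A * u ^+ n)).
    apply: eq_big_seq => u hin; rewrite /Fp !hornerE hu // expr0n (negPf (lt0n_neq0 m0)).
    by rewrite sub0r mulNr.
  rewrite big_split /= prod_const_seq prodrXl szu prod_roots szu.
  by rewrite -(scale1r (\prod_(_ <- _) _)) -Hus !hornerE expr0n (negPf (lt0n_neq0 k0)) add0r.
set L := (k * m - n)%:R : algC.
have hL0 : L != 0 by rewrite /L pnatr_eq0 subn_eq0 -ltnNge.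
set w := n%:R * C / L.
have [vs Hvs] := closed_field_poly_normal ('X^k - w%:P : {poly algC}).
rewrite lead_coefXnsubC // scale1r in Hvs; symmetry in Hvs.
have [szv hv] := @roots_facts algC k w vs k0 Hvs.
have hPH : \prod_(r <- rs) (L * r ^+ k - n%:R * C) =
   L ^+ (k * m) * (-1) ^+ (k * m * k) *
   (A ^+ k * (((w + C) ^+ m / A) ^+ (k %/ gcdn k n) - w ^+ (n %/ gcdn k n)) ^+ gcdn k n).
  transitivity (\prod_(r <- rs) (L *: \prod_(v <- vs) ('X - v%:P)).[r]).
    apply: eq_bigr => r _; rewrite Hvs hornerZ !hornerE /w; field; exact: hL0.
  rewrite prod_swap_poly sz szv HF.
  congr (_ * _).
  transitivity (\prod_(v <- vs) (A * ((w + C) ^+ m / A - v ^+ n))).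
    apply: eq_big_seq => v hin; rewrite /Fp !hornerE hv //; field; exact: hA.
  by rewrite big_split /= prod_const_seq szv (@euclid algC (k + n) k n (leqnn (k + n)) k0 w ((w + C) ^+ m / A) vs Hvs).
rewrite gcdnC in hPH.
rewrite -/L in E.
set t := gcdn n k in hPH *; set n1 := (n %/ t)%N in hPH *; set k1 := (k %/ t)%N in hPH *.
have t0 : (0 < t)%N by rewrite /t gcdn_gt0 hn.
have hkE : k = (k1 * t)%N by rewrite /k1 divnK // /t dvdn_gcdr.
have hnE : n = (n1 * t)%N by rewrite /n1 divnK // /t dvdn_gcdl.
have hn1 : (n1 <= k1 * m)%N.
  rewrite -(leq_pmul2r t0) -hnE mulnAC -hkE; exact: ltnW.
set K := (k * m)%:R : algC.
set B := K ^+ (k1 * m) * C ^+ (k1 * m - n1) - A ^+ k1 * n%:R ^+ n1 * L ^+ (k1 * m - n1).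
have hK : K = L + n%:R by rewrite /K /L -natrD subnK // ltnW.
have hw : w + C = K * C / L by rewrite /w hK; field; exact: hL0.
have ha : ((w + C) ^+ m / A) ^+ k1 - w ^+ n1 = C ^+ n1 * B / (A ^+ k1 * L ^+ (k1 * m)).
  rewrite hw /w /B !expr_div_n !exprMn -!exprM.
  rewrite !(mulnC m k1).
  have eC : C ^+ (k1 * m) = C ^+ n1 * C ^+ (k1 * m - n1) by rewrite -exprD subnKC.
  have eL : L ^+ (k1 * m) = L ^+ n1 * L ^+ (k1 * m - n1) by rewrite -exprD subnKC.
  rewrite eC eL.
  have h1 : A ^+ k1 != 0 by rewrite expf_neq0.
  have h2 : L ^+ n1 != 0 by rewrite expf_neq0.
  have h3 : L ^+ (k1 * m - n1) != 0 by rewrite expf_neq0.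
  field; rewrite h1 h2 h3 //.
rewrite ha !expr_div_n !exprMn -!exprM (mulnAC k1 m t) -hnE -hkE in hPH.
have hPH' : L ^+ (k * m) * (-1) ^+ (k * m * k) * (A ^+ k * (C ^+ n * B ^+ t / (A ^+ k * L ^+ (k * m))))
   = (-1) ^+ (k * m * k) * (C ^+ n * B ^+ t).
  have h1 : A ^+ k != 0 by rewrite expf_neq0.
  have h2 : L ^+ (k * m) != 0 by rewrite expf_neq0.
  field; rewrite h1 h2 //.
rewrite hPH hPH' hPG in E.
rewrite (exprNn A) !exprMn -!exprM in E.
have e1 : A ^+ (k * m) = A ^+ (k * (m - 1)) * A ^+ k.
  by rewrite -exprD; congr (_ ^+ _); case: (m) m0 => // m' _; rewrite subn1 /= mulnS addnC.
have e2 : (-1) ^+ (k * m * n) = (-1) ^+ (k * m * (n - 1)) * (-1) ^+ (k * m) :> algC.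
  by rewrite -exprD; congr (_ ^+ _); case: (n) hn => // n' _; rewrite subn1 /= mulnS addnC.
have e3 : C ^+ (m * n) = C ^+ (m * (n - 1)) * C ^+ m.
  by rewrite -exprD; congr (_ ^+ _); case: (n) hn => // n' _; rewrite subn1 /= mulnS addnC.
rewrite e1 e2 e3 in E.
have sg : (-1) ^+ ((k * m + n + t) * (m - 1)) =
   (-1) ^+ (k * m * (n - 1)) * ((-1) ^+ k)^-1 * ((-1) ^+ (k * n))^-1 :> algC.
  by rewrite !invr_sign -!exprD -[LHS]signr_odd -[RHS]signr_odd /t parity2.
rewrite sg.
have sn0 : forall e, (-1) ^+ e != 0 :> algC by move=> e; rewrite expf_neq0 // oppr_eq0 oner_eq0.
set Q := \prod_(r <- rs) _ in E *.
move: E.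
set s1 := (-1) ^+ (k * m * (n - 1)); set s2 := (-1) ^+ (k * m); set s3 := (-1) ^+ (k * m * k).
set s4 := (-1) ^+ k; set s5 := (-1) ^+ (k * n).
set a1 := A ^+ (k * (m - 1)); set a2 := A ^+ k; set c1 := C ^+ (m * (n - 1)); set c2 := C ^+ m.
set c3 := C ^+ n; set bt := B ^+ t.
move=> E.
have D0 : s2 * c2 * (s3 * (s4 * a2 * (s5 * c3))) != 0.
  by rewrite !mulf_neq0 // ?sn0 // expf_neq0.
apply: (mulIf D0); rewrite E.
have : s4 != 0 := sn0 _.
have : s5 != 0 := sn0 _.
move=> h5 h4.
field; rewrite h4 h5 //.
Qed.


Lemma zeroQ (C : algC) (k m n : nat) (rs : seq algC) :
  C != 0 -> (0 < n)%N -> (n < k * m)%N ->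
  \prod_(z <- rs) ('X - z%:P) = ('X^k + C%:P) ^+ m - 0 *: 'X^n ->
  \prod_(r <- rs) (('X^k + C%:P) ^+ m - 0 *: 'X^n)^`().[r] =
  (-1) ^+ ((k * m + n + gcdn n k) * (m - 1)) * 0 ^+ (k * (m - 1)) * C ^+ (m * (n - 1)) *
  ((k * m)%:R ^+ (k %/ gcdn n k * m) * C ^+ (k %/ gcdn n k * m - n %/ gcdn n k)
   - 0 ^+ (k %/ gcdn n k) * n%:R ^+ (n %/ gcdn n k)
     * (k * m - n)%:R ^+ (k %/ gcdn n k * m - n %/ gcdn n k)) ^+ gcdn n k.
Proof.
move=> hC hn hnk HF.
set Fp := (('X^k + C%:P) ^+ m - 0 *: 'X^n) in HF *.
have k0 : (0 < k)%N by case: k hnk {Fp HF} => //; rewrite mul0n.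
have m0 : (0 < m)%N by case: m hnk {Fp HF} => //; rewrite muln0.
have [sFp _] := @Fp_props 0 C k m n hn hnk.
have sz : size rs = (k * m)%N.
  by have := size_prod_XsubC rs id; rewrite HF -/Fp sFp; case.
have hr : forall r, r \in rs -> (r ^+ k + C) ^+ m = 0.
  move=> r hr; have : root (\prod_(z <- rs) ('X - z%:P)) r by rewrite root_prod_XsubC.
  by rewrite HF /root /Fp !hornerE ?mul0r ?subr0 => /eqP.
have [m1|m1] := eqVneq m 1%N.
  subst m.
  rewrite !muln1 subnn !muln0 !expr0 !mul1r.
  set t := gcdn n k; set n1 := (n %/ t)%N; set k1 := (k %/ t)%N.
  have t0 : (0 < t)%N by rewrite /t gcdn_gt0 hn.
  have k1pos : (0 < k1)%N by rewrite divn_gt0 // dvdn_leq // /t dvdn_gcdr.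
  rewrite expr0n (negPf (lt0n_neq0 k1pos)) !mul0r subr0 mul1n.
  have hkE : k = (k1 * t)%N by rewrite /k1 divnK // /t dvdn_gcdr.
  have hnE : n = (n1 * t)%N by rewrite /n1 divnK // /t dvdn_gcdl.
  rewrite exprMn -!exprM -hkE mulnBl -hkE -hnE.
  transitivity (\prod_(r <- rs) (k%:R * r ^+ k.-1)).
    apply: eq_bigr => r _; rewrite /Fp scale0r subr0 expr1 derivD derivXn derivC addr0.
    by rewrite hornerMn hornerXn mulr_natl.
  rewrite big_split /= prod_const_seq prodrXl sz prod_roots sz HF /Fp !hornerE.
  rewrite expr0n (negPf (lt0n_neq0 k0)) add0r subr0.
  rewrite exprMn -exprM.
  have -> : (-1) ^+ (k * k.-1) = 1 :> algC.
    rewrite -signr_odd; case: (k) k0 => // k' _ /=; rewrite oddM /=.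
    by case: (odd k').
  have eC : C ^+ k.-1 = C ^+ (n - 1) * C ^+ (k - n) by rewrite -exprD; congr (_ ^+ _); lia.
  rewrite mul1r eC /=; ring.
have m2 : (0 < m - 1)%N by lia.
rewrite expr0n muln_eq0 (negPf (lt0n_neq0 k0)) (negPf (lt0n_neq0 m2)) /= mulr0 !mul0r.
case: rs HF sz hr => [|r rs] HF sz hr; first by move: sz => /= /esym /eqP; rewrite muln_eq0 (negPf (lt0n_neq0 k0)) (negPf (lt0n_neq0 m0)).
rewrite big_cons deriv_val.
have : (r ^+ k + C) ^+ m = 0 by apply: hr; rewrite mem_head.
move/eqP; rewrite expf_eq0 => /andP [_ /eqP ->].
have m2' : (m.-1 == 0%N) = false by apply/negbTE; lia.
by rewrite expr0n m2' mulr0 mul0r mul0r subr0 mul0r.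
Qed.


Theorem mainTheorem1 (a c : int) (k m n : nat) :
  c != 0 -> (1 <= n)%N -> (n < k * m)%N ->
  let f : {poly int} := ('X^k + c%:P) ^+ m - a *: 'X^n in
  irreducible_poly (map_poly (intr : int -> rat) f) ->
  let t := gcdn n k in
  let n1 := (n %/ t)%N in
  let k1 := (k %/ t)%N in
  disc f =
    ((-1) ^+ ('C(k * m, 2) + (k * m + n + t) * (m - 1))
     * a ^+ (k * (m - 1)) * c ^+ (m * (n - 1))
     * (((k * m)%:Z) ^+ (k1 * m) * c ^+ (k1 * m - n1)
        - a ^+ k1 * (n%:Z) ^+ n1 * (((k * m - n)%N)%:Z) ^+ (k1 * m - n1)) ^+ t
     : int)%:~R.
Proof.
move=> hc hn hnk f _ t n1 k1.
have hC : (c%:~R : algC) != 0 by rewrite intr_eq0.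
have Hmap : map_poly (intr : int -> algC) f =
   ('X^k + (c%:~R)%:P) ^+ m - (a%:~R) *: 'X^n.
  by rewrite /f rmorphB rmorphXn rmorphD /= map_polyZ !map_polyXn map_polyC.
have [_ lc1] := @Fp_props (a%:~R) (c%:~R) k m n hn hnk.
rewrite /disc /int_poly_roots.
case: (closed_field_poly_normal (map_poly (intr : int -> algC) f)) => rs Hrs /=.
rewrite Hmap lc1 scale1r in Hrs; symmetry in Hrs.
transitivity (@D algC rs); first by [].
rewrite disc_deriv Hrs.
have sz : size rs = (k * m)%N.
  have [sFp _] := @Fp_props (a%:~R) (c%:~R) k m n hn hnk.
  by have := size_prod_XsubC rs id; rewrite Hrs sFp; case.
rewrite sz.
rewrite !(rmorphM, rmorphB, rmorphXn, rmorphN1) /=.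
rewrite exprD -!mulrA; congr (_ * _); rewrite !mulrA.
rewrite -!pmulrn -natrM /t /k1 /n1.
have [a0|a0] := eqVneq a 0.
  subst a; rewrite mulr0z; exact: zeroQ.
apply: mainQ => //; by rewrite intr_eq0.
Qed.
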